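(* Let $\odot$ be a non-degenerate pseudo-multiplication, and let $\tau$ be a $\sigma$-maxitive measure on a $\sigma$-algebra $\mathcal{B}$ of subsets of a nonempty set $E$. Then $\tau$ has the Radon–Nikodym property with respect to the idempotent $\odot$-integral if and only if $\tau$ is $\sigma$-$\odot$-finite and $\sigma$-principal.
   Context: Write $\overline{\mathbb{R}}_+=[0,\infty]$ and $\oplus$ for the supremum. A pseudo-multiplication is a binary operation $\odot$ on $\overline{\mathbb{R}}_+$ with the following properties: - it is associative; - it is continuous on $(0,\infty)\times[0,\infty]$; - for every $t$, the map $s\mapsto s\odot t$ is continuous on $(0,\infty]$; - it is nondecreasing in each argument; - it has a left identity $1_\odot$, i.e. $1_\odot\odot t=t$ for all $t$; - it has no zero divisors, i.e. $s\odot t=0$ implies $s=0$ or $t=0$; - $0\odot t=t\odot 0=0$ for all $t$. Put $O(t)=\inf_{s>0}s\odot t$. An element $t$ is $\odot$-finite if $O(t)=0$, and $\odot$-infinite otherwise. The operation $\odot$ is non-degenerate if $1_\odot$ is $\odot$-finite. Let $\mathcal{B}$ be a $\sigma$-algebra on $E$. A $\sigma$-ideal of $\mathcal{B}$ is a nonempty $\mathcal{I}\subset\mathcal{B}$ that is closed under countable unions and satisfies: $A\subset B\in\mathcal{I}$ with $A\in\mathcal{B}$ implies $A\in\mathcal{I}$. A $\sigma$-maxitive measure on $\mathcal{B}$ is a map $\nu:\mathcal{B}\to\overline{\mathbb{R}}_+$ with $\nu(\emptyset)=0$ and $\nu(\bigcup_{j\in J}B_j)=\sup_{j\in J}\nu(B_j)$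 for every countable family $(B_j)_{j\in J}$ in $\mathcal{B}$. A set $N\subset E$ is $\tau$-negligible if $N\subset B$ for some $B\in\mathcal{B}$ with $\tau(B)=0$. A map $f:E\to\overline{\mathbb{R}}_+$ is $\mathcal{B}$-measurable if $\{f>t\}\in\mathcal{B}$ for all $t\in[0,\infty)$. The idempotent $\odot$-integral of such $f$ over $B\in\mathcal{B}$ is $\int^\infty_B f\odot d\nu=\sup_{t\in[0,\infty)} t\odot\nu(B\cap\{f>t\})$. Let $\nu,\tau$ be $\sigma$-maxitive measures on $\mathcal{B}$. - $\nu$ has a density with respect to $\tau$ if there is a $\mathcal{B}$-measurable $c:E\to\overline{\mathbb{R}}_+$ with $\nu(B)=\int^\infty_B c\odot d\tau$ for all $B\in\mathcal{B}$. - $\nu$ is $\odot$-absolutely continuous with respect to $\tau$, written $\nu\ll_\odot\tau$, if $\nu(B)\le\infty\odot\tau(B)$ for every $B\in\mathcal{B}$ such that $\tau(B)$ is $\odot$-finite. - $\tau$ has the Radon–Nikodym property (with respect to the idempotent $\odot$-integral) if every $\sigma$-maxitive measure $\nu$ on $\mathcal{B}$ with $\nu\ll_\odot\tau$ has a density with respect to $\tau$. - $\tau$ is $\sigma$-$\odot$-finite if there is a countable family $(B_n)$ in $\mathcal{B}$ covering $E$ with each $\tau(B_n)$ $\odot$-finite. - $\tau$ is $\sigma$-principal if for every $\sigma$-ideal $\mathcal{I}$ of $\mathcal{B}$ there is $L\in\mathcal{I}$ such that $S\setminus L$ is $\tau$-negligible for all $S\in\mathcal{I}$. *)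

(* Defs.v *)
From Stdlib Require Import Reals.
Open Scope R_scope.

Inductive ERp : Type :=
| Fin (x : R) (_ : 0 <= x)
| Inf.

Definition zeroE : ERp := Fin 0 (Rle_refl 0).

Definition leE (a b : ERp) : Prop :=
  match a, b with
  | Fin x _, Fin y _ => x <= y
  | _, Inf => True
  | Inf, Fin _ _ => False
  end.

Definition ltE (a b : ERp) : Prop :=
  match a, b with
  | Fin x _, Fin y _ => x < y
  | Fin _ _, Inf => True
  | Inf, _ => False
  end.

Definition is_supE (S : ERp -> Prop) (m : ERp) : Prop :=
  (forall y, S y -> leE y m) /\
  (forall m', (forall y, S y -> leE y m') -> leE m m').

Definition is_infE (S : ERp -> Prop) (m : ERp) : Prop :=
  (forall y, S y -> leE m y) /\
  (forall m', (forall y, S y -> leE m' y) -> leE m' m).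

Definition nbhd (a : ERp) (U : ERp -> Prop) : Prop :=
  match a with
  | Fin x _ => exists eps, 0 < eps /\
      forall y (hy : 0 <= y), Rabs (y - x) < eps -> U (Fin y hy)
  | Inf => exists M : R, U Inf /\ forall y (hy : 0 <= y), M < y -> U (Fin y hy)
  end.

Definition pos_finite (a : ERp) : Prop :=
  match a with Fin x _ => 0 < x | Inf => False end.

Definition pseudo_mult (op : ERp -> ERp -> ERp) (one : ERp) : Prop :=
  (forall a b c, op (op a b) c = op a (op b c)) /\
  (* continuous on (0,oo) x [0,oo] *)
  (forall s t, pos_finite s ->
     forall V, nbhd (op s t) V ->
       exists U W, nbhd s U /\ nbhd t W /\
         forall s' t', U s' -> pos_finite s' -> W t' -> V (op s' t')) /\
  (* for every t, s |-> s (.) t continuous on (0, oo] *)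
  (forall t s, ltE zeroE s ->
     forall V, nbhd (op s t) V ->
       exists U, nbhd s U /\ forall s', U s' -> ltE zeroE s' -> V (op s' t)) /\
  (forall a a' b, leE a a' -> leE (op a b) (op a' b)) /\
  (forall a b b', leE b b' -> leE (op a b) (op a b')) /\
  (forall t, op one t = t) /\
  (forall s t, op s t = zeroE -> s = zeroE \/ t = zeroE) /\
  (forall t, op zeroE t = zeroE /\ op t zeroE = zeroE).

Definition ofinite (op : ERp -> ERp -> ERp) (t : ERp) : Prop :=
  is_infE (fun y => exists s, ltE zeroE s /\ y = op s t) zeroE.

Definition nondegenerate (op : ERp -> ERp -> ERp) (one : ERp) : Prop :=
  ofinite op one.

Section Sets.
Context {E : Type}.

Definition bigU (F : nat -> E -> Prop) : E -> Prop := fun x => exists n, F n x.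

Definition sigma_algebra (B : (E -> Prop) -> Prop) : Prop :=
  B (fun _ => True) /\
  (forall A, B A -> B (fun x => ~ A x)) /\
  (forall F : nat -> E -> Prop, (forall n, B (F n)) -> B (bigU F)).

Definition sigma_ideal (B I : (E -> Prop) -> Prop) : Prop :=
  (exists A, I A) /\
  (forall A, I A -> B A) /\
  (forall F : nat -> E -> Prop, (forall n, I (F n)) -> I (bigU F)) /\
  (forall A C, B A -> I C -> (forall x, A x -> C x) -> I A).

(** sigma-maxitive measure on B (countable families indexed by nat;
    finite families are covered by padding with the empty set). *)
Definition sigma_maxitive (B : (E -> Prop) -> Prop) (nu : (E -> Prop) -> ERp) : Prop :=
  nu (fun _ => False) = zeroE /\
  (forall F : nat -> E -> Prop, (forall n, B (F n)) ->
     is_supE (fun y => exists n, y = nu (F n)) (nu (bigU F))).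

Definition negligible (B : (E -> Prop) -> Prop) (tau : (E -> Prop) -> ERp)
  (N : E -> Prop) : Prop :=
  exists C, B C /\ tau C = zeroE /\ forall x, N x -> C x.

Definition measurable (B : (E -> Prop) -> Prop) (f : E -> ERp) : Prop :=
  forall t, t <> Inf -> B (fun x => ltE t (f x)).

Definition integral_is (op : ERp -> ERp -> ERp) (nu : (E -> Prop) -> ERp)
  (A : E -> Prop) (f : E -> ERp) (v : ERp) : Prop :=
  is_supE (fun y => exists t, t <> Inf /\
             y = op t (nu (fun x => A x /\ ltE t (f x)))) v.

Definition has_density (op : ERp -> ERp -> ERp) (B : (E -> Prop) -> Prop)
  (nu tau : (E -> Prop) -> ERp) : Prop :=
  exists c : E -> ERp, measurable B c /\
    forall A, B A -> integral_is op tau A c (nu A).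

Definition abs_cont (op : ERp -> ERp -> ERp) (B : (E -> Prop) -> Prop)
  (nu tau : (E -> Prop) -> ERp) : Prop :=
  forall A, B A -> ofinite op (tau A) -> leE (nu A) (op Inf (tau A)).

Definition RN_property (op : ERp -> ERp -> ERp) (B : (E -> Prop) -> Prop)
  (tau : (E -> Prop) -> ERp) : Prop :=
  forall nu, sigma_maxitive B nu -> abs_cont op B nu tau -> has_density op B nu tau.

Definition sigma_ofinite (op : ERp -> ERp -> ERp) (B : (E -> Prop) -> Prop)
  (tau : (E -> Prop) -> ERp) : Prop :=
  exists F : nat -> E -> Prop,
    (forall n, B (F n) /\ ofinite op (tau (F n))) /\ (forall x, exists n, F n x).

Definition sigma_principal (B : (E -> Prop) -> Prop) (tau : (E -> Prop) -> ERp) : Prop :=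
  forall I, sigma_ideal B I ->
    exists L, I L /\ forall S, I S -> negligible B tau (fun x => S x /\ ~ L x).

End Sets.

(* Main.v *)
Require Import Defs.
From Stdlib Require Import Reals.
From Stdlib Require Import Lra Lia Classical ClassicalEpsilon FunctionalExtensionality PropExtensionality ProofIrrelevance.
From Stdlib Require Import Cantor ZArith.
Open Scope R_scope.


Lemma Fin_eq x y p q : x = y -> Fin x p = Fin y q.
Proof. intros ->. f_equal. apply proof_irrelevance. Qed.

Lemma leE_refl a : leE a a.
Proof. destruct a; simpl; auto; lra. Qed.
Lemma leE_trans a b c : leE a b -> leE b c -> leE a c.
Proof. destruct a, b, c; simpl; intuition lra. Qed.
Lemma leE_antisym a b : leE a b -> leE b a -> a = b.
Proof. destruct a, b; simpl; intros; try contradiction; auto. apply Fin_eq; lra. Qed.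
Lemma leE_0 a : leE zeroE a.
Proof. destruct a; simpl; auto. Qed.
Lemma leE_Inf a : leE a Inf.
Proof. destruct a; simpl; auto. Qed.
Lemma ltE_leE a b : ltE a b -> leE a b.
Proof. destruct a, b; simpl; intuition lra. Qed.
Lemma ltE_nle a b : ltE a b <-> ~ leE b a.
Proof. destruct a, b; simpl; intuition lra. Qed.
Lemma leE_nlt a b : leE a b <-> ~ ltE b a.
Proof. destruct a, b; simpl; intuition lra. Qed.
Lemma leE_total a b : leE a b \/ leE b a.
Proof. destruct a, b; simpl; auto; lra. Qed.
Lemma ltE_le_trans a b c : ltE a b -> leE b c -> ltE a c.
Proof. destruct a, b, c; simpl; intuition lra. Qed.
Lemma leE_lt_trans a b c : leE a b -> ltE b c -> ltE a c.
Proof. destruct a, b, c; simpl; intuition lra. Qed.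
Lemma ltE_irrefl a : ~ ltE a a.
Proof. destruct a; simpl; auto; lra. Qed.
Lemma leE_0_eq a : leE a zeroE -> a = zeroE.
Proof. destruct a; simpl; intros; try contradiction. apply Fin_eq; lra. Qed.
Lemma ltE_0_neq a : ltE zeroE a <-> a <> zeroE.
Proof.
  split.
  - intros H ->. exact (ltE_irrefl _ H).
  - intros H. apply ltE_nle. intros H'. apply H, leE_0_eq, H'.
Qed.

Lemma sup_exists (S : ERp -> Prop) : exists m, is_supE S m.
Proof.
  destruct (classic (S Inf)) as [HI|HI].
  { exists Inf. split. intros; apply leE_Inf. intros m' H. apply H, HI. }
  set (P := fun x => exists p, S (Fin x p)).
  destruct (classic (exists x, P x)) as [[x0 Hx0]|HP].
  2:{ exists zeroE. split.
      - intros [x p|] Hy. exfalso; apply HP; exists x, p; exact Hy. contradiction.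
      - intros; apply leE_0. }
  destruct (classic (bound P)) as [Hb|Hb].
  - destruct (completeness P Hb (ex_intro _ x0 Hx0)) as [l [Hl1 Hl2]].
    assert (Hl0 : 0 <= l).
    { destruct Hx0 as [p Hp]. assert (x0 <= l) by (apply Hl1; exists p; exact Hp). lra. }
    exists (Fin l Hl0). split.
    + intros [x p|] Hy; [|contradiction]. simpl. apply Hl1. exists p; exact Hy.
    + intros [z q|] Hm; simpl; auto. apply Hl2. intros x [p Hp]. exact (Hm _ Hp).
  - exists Inf. split. intros; apply leE_Inf.
    intros [z q|] Hm; simpl; auto. exfalso. apply Hb. exists z. intros x [p Hp]. exact (Hm _ Hp).
Qed.

Lemma sup_unique S m m' : is_supE S m -> is_supE S m' -> m = m'.
Proof. intros [H1 H2] [H3 H4]. apply leE_antisym; auto. Qed.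

Lemma inf_exists (S : ERp -> Prop) : exists m, is_infE S m.
Proof.
  destruct (sup_exists (fun z => forall y, S y -> leE z y)) as [m [H1 H2]].
  exists m. split.
  - intros y Hy. apply H2. intros z Hz. apply Hz, Hy.
  - intros m' Hm'. apply H1. exact Hm'.
Qed.

Lemma inf_unique S m m' : is_infE S m -> is_infE S m' -> m = m'.
Proof. intros [H1 H2] [H3 H4]. apply leE_antisym; auto. Qed.

Lemma sup_lt S m a : is_supE S m -> ltE a m -> exists y, S y /\ ltE a y.
Proof.
  intros [H1 H2] Ha. apply NNPP. intros Hn. apply (ltE_irrefl a).
  eapply ltE_le_trans; [exact Ha|]. apply H2. intros y Hy.
  apply leE_nlt. intros Hy'. apply Hn. exists y. auto.
Qed.

Lemma inf_gt S m a : is_infE S m -> ltE m a -> exists y, S y /\ ltE y a.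
Proof.
  intros [H1 H2] Ha. apply NNPP. intros Hn. apply (ltE_irrefl a).
  eapply leE_lt_trans; [|exact Ha]. apply H2. intros y Hy.
  apply leE_nlt. intros Hy'. apply Hn. exists y. auto.
Qed.

Definition supE (S : ERp -> Prop) : ERp :=
  proj1_sig (constructive_indefinite_description _ (sup_exists S)).
Lemma supE_spec S : is_supE S (supE S).
Proof. unfold supE. destruct (constructive_indefinite_description _ _). auto. Qed.
Definition infE (S : ERp -> Prop) : ERp :=
  proj1_sig (constructive_indefinite_description _ (inf_exists S)).
Lemma infE_spec S : is_infE S (infE S).
Proof. unfold infE. destruct (constructive_indefinite_description _ _). auto. Qed.

Lemma set_ext {E : Type} (A C : E -> Prop) : (forall x, A x <-> C x) -> A = C.
Proof. intros H. apply functional_extensionality. intros x. apply propositional_extensionality. apply H. Qed.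


Section SetLemmas.
Context {E : Type} (B : (E -> Prop) -> Prop) (HB : sigma_algebra B).

Lemma B_full : B (fun _ => True).
Proof. apply HB. Qed.
Lemma B_compl A : B A -> B (fun x => ~ A x).
Proof. apply HB. Qed.
Lemma B_bigU F : (forall n, B (F n)) -> B (bigU F).
Proof. apply HB. Qed.
Lemma B_empty : B (fun _ => False).
Proof.
  replace (fun _ : E => False) with (fun x : E => ~ (fun _ => True) x).
  apply B_compl, B_full. apply set_ext. intros x; tauto.
Qed.
Definition two (A C : E -> Prop) : nat -> E -> Prop :=
  fun n => match n with O => A | _ => C end.
Lemma bigU_two A C : bigU (two A C) = (fun x => A x \/ C x).
Proof.
  apply set_ext. intros x. unfold bigU, two. split.
  - intros [[|n] H]; auto.
  - intros [H|H]. exists O; auto. exists 1%nat; auto.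
Qed.
Lemma B_two A C n : B A -> B C -> B (two A C n).
Proof. destruct n; simpl; auto. Qed.
Lemma B_union A C : B A -> B C -> B (fun x => A x \/ C x).
Proof. intros. rewrite <- bigU_two. apply B_bigU. intros; apply B_two; auto. Qed.
Lemma B_inter A C : B A -> B C -> B (fun x => A x /\ C x).
Proof.
  intros HA HC.
  replace (fun x => A x /\ C x) with (fun x => ~ (fun y => (fun z => ~ A z) y \/ (fun z => ~ C z) y) x).
  apply B_compl, B_union; apply B_compl; auto.
  apply set_ext; intros x; simpl. tauto.
Qed.
Lemma B_diff A C : B A -> B C -> B (fun x => A x /\ ~ C x).
Proof. intros. apply B_inter; auto. apply B_compl; auto. Qed.
Lemma B_ext A C : (forall x, A x <-> C x) -> B A -> B C.
Proof. intros H. rewrite (set_ext A C H). auto. Qed.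

Section Maxitive.
Context (nu : (E -> Prop) -> ERp) (Hnu : sigma_maxitive B nu).

Lemma mx_empty : nu (fun _ => False) = zeroE.
Proof. apply Hnu. Qed.
Lemma mx_ext A C : (forall x, A x <-> C x) -> nu A = nu C.
Proof. intros H. rewrite (set_ext A C H). auto. Qed.
Lemma mx_sup F : (forall n, B (F n)) -> is_supE (fun y => exists n, y = nu (F n)) (nu (bigU F)).
Proof. apply Hnu. Qed.
Lemma mx_ub F n : (forall n, B (F n)) -> leE (nu (F n)) (nu (bigU F)).
Proof. intros H. apply (mx_sup F H). eauto. Qed.
Lemma mx_least F m : (forall n, B (F n)) -> (forall n, leE (nu (F n)) m) -> leE (nu (bigU F)) m.
Proof. intros H Hm. apply (mx_sup F H). intros y [n ->]. auto. Qed.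
Lemma mx_union_least A C m : B A -> B C -> leE (nu A) m -> leE (nu C) m ->
  leE (nu (fun x => A x \/ C x)) m.
Proof.
  intros HA HC H1 H2. rewrite <- bigU_two. apply mx_least.
  intros; apply B_two; auto. intros [|n]; simpl; auto.
Qed.
Lemma mx_mono A C : B A -> B C -> (forall x, A x -> C x) -> leE (nu A) (nu C).
Proof.
  intros HA HC H.
  replace C with (bigU (two A C)).
  apply (mx_ub (two A C) O). intros; apply B_two; auto.
  rewrite bigU_two. apply set_ext. intros x. split; auto. intros [?|?]; auto.
Qed.
Lemma mx_union_cases A C : B A -> B C -> ltE zeroE (nu (fun x => A x \/ C x)) ->
  ltE zeroE (nu A) \/ ltE zeroE (nu C).
Proof.
  intros HA HC H. apply NNPP. intros Hn.
  assert (nu A = zeroE) by (apply leE_0_eq, leE_nlt; intros ?; apply Hn; auto).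
  assert (nu C = zeroE) by (apply leE_0_eq, leE_nlt; intros ?; apply Hn; auto).
  apply (ltE_irrefl zeroE). eapply ltE_le_trans; [exact H|].
  apply mx_union_least; auto. rewrite H0; apply leE_refl. rewrite H1; apply leE_refl.
Qed.
Lemma mx_null_union A C : B A -> B C -> nu A = zeroE -> nu C = zeroE -> nu (fun x => A x \/ C x) = zeroE.
Proof.
  intros HA HC H1 H2. apply leE_0_eq. apply mx_union_least; auto.
  rewrite H1; apply leE_refl. rewrite H2; apply leE_refl.
Qed.
Lemma mx_null_bigU F : (forall n, B (F n)) -> (forall n, nu (F n) = zeroE) -> nu (bigU F) = zeroE.
Proof. intros H1 H2. apply leE_0_eq, mx_least; auto. intros n; rewrite H2; apply leE_refl. Qed.
Lemma mx_null_sub A C : B A -> B C -> (forall x, A x -> C x) -> nu C = zeroE -> nu A = zeroE.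
Proof. intros. apply leE_0_eq. rewrite <- H2. apply mx_mono; auto. Qed.

End Maxitive.
End SetLemmas.


Lemma nbhd_self a U : nbhd a U -> U a.
Proof.
  destruct a as [x p|]; simpl.
  - intros [eps [He H]]. apply H. rewrite Rminus_diag, Rabs_R0. exact He.
  - intros [M [H _]]. exact H.
Qed.

Lemma nbhd_lt a b : ltE a b -> nbhd a (fun y => ltE y b).
Proof.
  destruct a as [x p|]; simpl; [|contradiction].
  destruct b as [z q|]; simpl; intros H.
  - exists (z - x). split; [lra|]. intros y hy Hy. simpl.
    apply Rabs_def2 in Hy. lra.
  - exists 1. split; [lra|]. intros; simpl; auto.
Qed.

Lemma nbhd_gt a b : ltE b a -> nbhd a (fun y => ltE b y).
Proof.
  destruct a as [x p|]; simpl.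
  - destruct b as [z q|]; simpl; [|contradiction]. intros H.
    exists (x - z). split; [lra|]. intros y hy Hy. simpl.
    apply Rabs_def2 in Hy. lra.
  - destruct b as [z q|]; simpl; [|contradiction]. intros _.
    exists z. split; [simpl; auto|]. intros y hy Hy; simpl; lra.
Qed.

Lemma sup_nbhd X u W : is_supE X u -> (exists y, X y) -> nbhd u W -> exists y, X y /\ W y.
Proof.
  intros [H1 H2] [y0 Hy0] HW. apply NNPP. intros Hn.
  destruct u as [x p|]; simpl in HW.
  - destruct HW as [eps [He HW]].
    assert (Hall : forall y, X y -> exists z q, y = Fin z q /\ z <= x - eps).
    { intros [z q|] Hy.
      - exists z, q. split; auto. specialize (H1 _ Hy). simpl in H1.
        destruct (Rle_dec z (x - eps)); auto. exfalso. apply Hn. exists (Fin z q). split; auto.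
        apply HW. rewrite Rabs_left1; lra.
      - specialize (H1 _ Hy). simpl in H1. contradiction. }
    destruct (Rle_dec 0 (x - eps)) as [Hxe|Hxe].
    + assert (Hle : leE (Fin x p) (Fin (x - eps) Hxe)).
      { apply H2. intros y Hy. destruct (Hall y Hy) as (z & q & -> & Hz). simpl; auto. }
      simpl in Hle. lra.
    + destruct (Hall y0 Hy0) as (z & q & -> & Hz). lra.
  - destruct HW as [M [HI HW]].
    assert (HM : 0 <= Rmax M 0) by apply Rmax_r.
    assert (Hle : leE Inf (Fin (Rmax M 0) HM)).
    { apply H2. intros [z q|] Hy.
      - simpl. destruct (Rle_dec z M). pose proof (Rmax_l M 0); lra.
        exfalso. apply Hn. exists (Fin z q). split; auto. apply HW. lra.
      - exfalso. apply Hn. exists Inf. auto. }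
    simpl in Hle. auto.
Qed.

Lemma inf_eventually (u : nat -> ERp) us W :
  (forall n, leE (u (S n)) (u n)) -> is_infE (fun y => exists n, y = u n) us -> nbhd us W ->
  exists K, forall k, (K <= k)%nat -> W (u k).
Proof.
  intros Hdec [H1 H2] HW.
  assert (Hmono : forall k k', (k <= k')%nat -> leE (u k') (u k)).
  { intros k k' Hk. induction Hk. apply leE_refl. eapply leE_trans; eauto. }
  destruct us as [x p|]; simpl in HW.
  - destruct HW as [eps [He HW]].
    assert (Hlt : ltE (Fin x p) (Fin (x + eps) ltac:(lra))) by (simpl; lra).
    destruct (inf_gt _ _ _ (conj H1 H2) Hlt) as [y [[K ->] HK]].
    exists K. intros k Hk. specialize (H1 (u k) (ex_intro _ k eq_refl)).
    pose proof (leE_lt_trans _ _ _ (Hmono _ _ Hk) HK) as Hk'.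
    destruct (u k) as [z q|] eqn:Huk; simpl in *; [|contradiction].
    apply HW. apply Rabs_def1; lra.
  - exists O. intros k _. specialize (H1 (u k) (ex_intro _ k eq_refl)).
    destruct (u k); simpl in H1; [contradiction|]. destruct HW; tauto.
Qed.

Section OpLemmas.
Context (op : ERp -> ERp -> ERp) (one : ERp) (Hpm : pseudo_mult op one).

Lemma op_monol a a' b : leE a a' -> leE (op a b) (op a' b).
Proof. destruct Hpm as (_ & _ & _ & H & _). apply H. Qed.
Lemma op_monor a b b' : leE b b' -> leE (op a b) (op a b').
Proof. destruct Hpm as (_ & _ & _ & _ & H & _). apply H. Qed.
Lemma op_mono a a' b b' : leE a a' -> leE b b' -> leE (op a b) (op a' b').
Proof. intros. eapply leE_trans. apply op_monol; eauto. apply op_monor; auto. Qed.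
Lemma op_one t : op one t = t.
Proof. destruct Hpm as (_ & _ & _ & _ & _ & H & _). apply H. Qed.
Lemma op_nzd s t : op s t = zeroE -> s = zeroE \/ t = zeroE.
Proof. destruct Hpm as (_ & _ & _ & _ & _ & _ & H & _). apply H. Qed.
Lemma op_0l t : op zeroE t = zeroE.
Proof. destruct Hpm as (_ & _ & _ & _ & _ & _ & _ & H). apply H. Qed.
Lemma op_0r t : op t zeroE = zeroE.
Proof. destruct Hpm as (_ & _ & _ & _ & _ & _ & _ & H). apply H. Qed.
Lemma op_cont2 s t : pos_finite s -> forall V, nbhd (op s t) V ->
  exists U W, nbhd s U /\ nbhd t W /\ forall s' t', U s' -> pos_finite s' -> W t' -> V (op s' t').
Proof. destruct Hpm as (_ & H & _). apply H. Qed.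
Lemma op_cont1 t s : ltE zeroE s -> forall V, nbhd (op s t) V ->
  exists U, nbhd s U /\ forall s', U s' -> ltE zeroE s' -> V (op s' t).
Proof. destruct Hpm as (_ & _ & H & _). apply H. Qed.

Lemma op_pos s t : ltE zeroE s -> ltE zeroE t -> ltE zeroE (op s t).
Proof.
  intros Hs Ht. apply ltE_0_neq. intros H. apply op_nzd in H.
  destruct H as [H|H]; subst; apply (ltE_irrefl zeroE); assumption.
Qed.

Lemma one_pos : ltE zeroE one.
Proof.
  apply ltE_0_neq. intros H. pose proof (op_one Inf) as H1. rewrite H, op_0l in H1. discriminate.
Qed.

Lemma op_sup_r_least r X u m : pos_finite r -> is_supE X u -> (exists y, X y) ->
  (forall y, X y -> leE (op r y) m) -> leE (op r u) m.
Proof.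
  intros Hr Hu Hne Hm. apply leE_nlt. intros Hlt.
  destruct (op_cont2 r u Hr _ (nbhd_gt _ _ Hlt)) as (U & W & HU & HW & H).
  destruct (sup_nbhd X u W Hu Hne HW) as [y [Hy Wy]].
  specialize (H r y (nbhd_self _ _ HU) Hr Wy).
  apply (ltE_irrefl m). eapply ltE_le_trans; eauto.
Qed.

Lemma op_left_open s u a : ltE zeroE s -> ltE a (op s u) ->
  exists U, nbhd s U /\ forall s', U s' -> ltE zeroE s' -> ltE a (op s' u).
Proof. intros Hs Ha. apply (op_cont1 u s Hs _ (nbhd_gt _ _ Ha)). Qed.

Lemma ofinite_0 : ofinite op zeroE.
Proof.
  split.
  - intros; apply leE_0.
  - intros m' Hm. assert (H1 : 0 <= 1) by lra.
    assert (H2 : ltE zeroE (Fin 1 H1)) by (unfold zeroE; simpl; lra).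
    assert (Hx : exists s, ltE zeroE s /\ op (Fin 1 H1) zeroE = op s zeroE) by eauto.
    specialize (Hm _ Hx). rewrite op_0r in Hm. exact Hm.
Qed.

Lemma ofinite_down u v : leE u v -> ofinite op v -> ofinite op u.
Proof.
  intros Huv [_ H]. split.
  - intros; apply leE_0.
  - intros m' Hm. apply H. intros y [s [Hs ->]]. eapply leE_trans.
    apply Hm. exists s; eauto. apply op_monor; auto.
Qed.

Lemma ofinite_small u a : ofinite op u -> ltE zeroE a -> exists s, ltE zeroE s /\ ltE (op s u) a.
Proof.
  intros Hu Ha. destruct (inf_gt _ _ _ Hu Ha) as [y [[s [Hs ->]] Hy]]. eauto.
Qed.

Lemma ofinite_lb u m : ofinite op u -> (forall s, ltE zeroE s -> leE m (op s u)) -> m = zeroE.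
Proof.
  intros [_ H] Hm. apply leE_0_eq. apply H. intros y [s [Hs ->]]. auto.
Qed.

Lemma not_ofinite_lb u m : ~ ofinite op u -> is_infE (fun y => exists s, ltE zeroE s /\ y = op s u) m ->
  ltE zeroE m.
Proof.
  intros Hn Hm. apply ltE_0_neq. intros ->. apply Hn. exact Hm.
Qed.

End OpLemmas.


Definition mkE (x : R) : ERp :=
  match Rle_dec 0 x with left p => Fin x p | right _ => zeroE end.
Lemma mkE_Fin x p : mkE x = Fin x p.
Proof. unfold mkE. destruct (Rle_dec 0 x). apply Fin_eq; auto. contradiction. Qed.
Ltac rew_mkE := repeat match goal with |- context [mkE ?x] => let H := fresh "Hmk" in assert (H : 0 <= x) by lra; rewrite (mkE_Fin x H) end.
Ltac rew_mkE_in h := repeat match type of h with context [mkE ?x] => let H := fresh "Hmk" in assert (H : 0 <= x) by lra; rewrite (mkE_Fin x H) in h end.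

Lemma mkE_pos x : 0 < x -> ltE zeroE (mkE x).
Proof. intros H. rewrite (mkE_Fin x (Rlt_le _ _ H)). unfold zeroE; cbn [ltE leE]; lra. Qed.
Lemma mkE_notInf x : mkE x <> Inf.
Proof. unfold mkE. destruct (Rle_dec 0 x); discriminate. Qed.

Lemma exists_inv_lt eps : 0 < eps -> exists k, / INR (Datatypes.S k) < eps.
Proof.
  intros He. destruct (archimed (/ eps)) as [H1 _].
  assert (Hpos : 0 < / eps) by (apply Rinv_0_lt_compat; auto).
  exists (Z.to_nat (up (/ eps))).
  rewrite S_INR, INR_IZR_INZ, Z2Nat.id.
  2:{ apply le_IZR. lra. }
  rewrite <- (Rinv_inv eps) at 2. apply Rinv_lt_contravar. nra. lra.
Qed.

Lemma inv_S_pos k : 0 < / INR (Datatypes.S k).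
Proof. apply Rinv_0_lt_compat. apply lt_0_INR. lia. Qed.

Lemma pos_exists_inv a : ltE zeroE a -> exists k, ltE (mkE (/ INR (Datatypes.S k))) a.
Proof.
  destruct a as [y q|]; intros H.
  - unfold zeroE in H; cbn [ltE leE] in H. destruct (exists_inv_lt y H) as [k Hk]. exists k.
    rewrite (mkE_Fin _ (Rlt_le _ _ (inv_S_pos k))). cbn [ltE leE]. auto.
  - exists O. rewrite (mkE_Fin _ (Rlt_le _ _ (inv_S_pos O))). cbn [ltE leE]. auto.
Qed.

Lemma le_approx v x p : (forall eps, 0 < eps -> leE v (mkE (x + eps))) -> leE v (Fin x p).
Proof.
  intros H. destruct v as [y q|].
  - cbn [ltE leE]. destruct (Rle_dec y x) as [|Hyx]; auto.
    specialize (H ((y - x)/2) ltac:(lra)). rew_mkE_in H. cbn [ltE leE] in H. lra.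
  - specialize (H 1 ltac:(lra)). rew_mkE_in H. cbn [ltE leE] in H. contradiction.
Qed.

Section SigmaPrincipal.
Context {E : Type} (B : (E -> Prop) -> Prop) (HB : sigma_algebra B).
Context (op : ERp -> ERp -> ERp) (one : ERp) (Hpm : pseudo_mult op one).
Context (tau : (E -> Prop) -> ERp) (Htau : sigma_maxitive B tau).

Lemma ideal_empty I : sigma_ideal B I -> I (fun _ => False).
Proof.
  intros (HI1 & HI2 & HI3 & HI4). destruct HI1 as [A0 HA0].
  apply (HI4 _ A0); auto. apply B_empty; auto. intros x [].
Qed.

Lemma ideal_B I A : sigma_ideal B I -> I A -> B A.
Proof. intros (_ & H & _). auto. Qed.

Definition rho (I : (E -> Prop) -> Prop) (A : E -> Prop) : ERp :=
  infE (fun y => exists S, I S /\ y = tau (fun x => A x /\ ~ S x)).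

Lemma rho_le I A S : I S -> leE (rho I A) (tau (fun x => A x /\ ~ S x)).
Proof. intros HS. apply (infE_spec _). eauto. Qed.

Lemma rho_attained I A : sigma_ideal B I -> B A ->
  exists S, I S /\ tau (fun x => A x /\ ~ S x) = rho I A.
Proof.
  intros HI HA. pose proof (infE_spec (fun y => exists S, I S /\ y = tau (fun x => A x /\ ~ S x))) as Hm.
  fold (rho I A) in Hm.
  destruct (rho I A) as [x p|] eqn:Hr.
  - assert (Hex : forall k, exists S, I S /\ ltE (tau (fun x => A x /\ ~ S x)) (mkE (x + / INR (Datatypes.S k)))).
    { intros k. assert (Hl : ltE (Fin x p) (mkE (x + / INR (Datatypes.S k)))).
      { pose proof (inv_S_pos k). rew_mkE. cbn [ltE leE]. lra. }
      destruct (inf_gt _ _ _ Hm Hl) as [y [[S [HS ->]] Hy]]. eauto. }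
    set (Sk := fun k => proj1_sig (constructive_indefinite_description _ (Hex k))).
    assert (HSk : forall k, I (Sk k) /\ ltE (tau (fun x => A x /\ ~ Sk k x)) (mkE (x + / INR (Datatypes.S k)))).
    { intros k. unfold Sk. destruct (constructive_indefinite_description _ _). auto. }
    exists (bigU Sk). assert (HIS : I (bigU Sk)) by (apply HI; intros; apply HSk).
    split; auto. apply leE_antisym.
    + apply le_approx. intros eps He. destruct (exists_inv_lt eps He) as [k Hk].
      apply leE_trans with (tau (fun x => A x /\ ~ Sk k x)).
      * apply (mx_mono B tau Htau).
        -- apply B_diff; auto. apply (ideal_B I); auto.
        -- apply B_diff; auto. apply (ideal_B I); auto. apply HSk.
        -- intros z [Hz1 Hz2]. split; auto. intros Hz3. apply Hz2. exists k. auto.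
      * eapply leE_trans. apply ltE_leE, HSk.
        pose proof (inv_S_pos k). rew_mkE. cbn [ltE leE]. lra.
    + apply Hm. eauto.
  - exists (fun _ => False). split. apply ideal_empty; auto.
    apply leE_antisym. apply leE_Inf. apply Hm. exists (fun _ => False). split; auto. apply ideal_empty; auto.
Qed.

Lemma rho_mono I A C : sigma_ideal B I -> B A -> B C -> (forall x, A x -> C x) -> leE (rho I A) (rho I C).
Proof.
  intros HI HA HC Hsub. destruct (rho_attained I C HI HC) as [S [HS Heq]].
  rewrite <- Heq. eapply leE_trans. apply (rho_le I A S HS).
  apply (mx_mono B tau Htau).
  apply B_diff; auto; apply (ideal_B I); auto.
  apply B_diff; auto; apply (ideal_B I); auto.
  intros x [H1 H2]; auto.
Qed.

Lemma rho_maxitive I : sigma_ideal B I -> sigma_maxitive B (rho I).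
Proof.
  intros HI. split.
  - apply leE_0_eq. eapply leE_trans. apply (rho_le I _ _ (ideal_empty I HI)).
    rewrite (mx_ext tau _ (fun _ => False)); [|intros; cbv beta; tauto]. rewrite (mx_empty B tau Htau). apply leE_refl.
  - intros F HF.
    assert (Hex : forall n, exists S, I S /\ tau (fun x => F n x /\ ~ S x) = rho I (F n)).
    { intros n. apply rho_attained; auto. }
    set (Sn := fun n => proj1_sig (constructive_indefinite_description _ (Hex n))).
    assert (HSn : forall n, I (Sn n) /\ tau (fun x => F n x /\ ~ Sn n x) = rho I (F n)).
    { intros n. unfold Sn. destruct (constructive_indefinite_description _ _). auto. }
    assert (HIS : I (bigU Sn)) by (apply HI; intros; apply HSn).
    assert (HBS : B (bigU Sn)) by (apply (ideal_B I); auto).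
    split.
    + intros y [n ->]. apply rho_mono; auto. apply B_bigU; auto. intros x Hx. exists n; auto.
    + intros m' Hm'. eapply leE_trans. apply (rho_le I _ _ HIS).
      rewrite (mx_ext tau _ (bigU (fun n x => F n x /\ ~ bigU Sn x))).
      2:{ intros x. unfold bigU. split. intros [[n H1] H2]. exists n; auto. intros [n [H1 H2]]. split; eauto. }
      apply (mx_least B tau Htau). intros n; apply B_diff; auto.
      intros n. eapply leE_trans. 2: apply Hm'; eauto.
      rewrite <- (proj2 (HSn n)). apply (mx_mono B tau Htau).
      apply B_diff; auto. apply B_diff; auto. apply (ideal_B I); auto. apply HSn.
      intros x [H1 H2]. split; auto. intros H3. apply H2. exists n; auto.
Qed.

Lemma rho_abs_cont I : sigma_ideal B I -> abs_cont op B (rho I) tau.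
Proof.
  intros HI A HA _. eapply leE_trans. apply (rho_le I A _ (ideal_empty I HI)).
  rewrite (mx_ext tau _ A) by tauto.
  rewrite <- (op_one op one Hpm (tau A)) at 1. apply (op_monol op one Hpm); auto. apply leE_Inf.
Qed.

Lemma RN_sigma_principal : RN_property op B tau -> sigma_principal B tau.
Proof.
  intros HRN I HI.
  destruct (HRN (rho I) (rho_maxitive I HI) (rho_abs_cont I HI)) as [c [Hc Hint]].
  set (Zs := fun x => ~ ltE zeroE (c x)).
  assert (HBZ : B Zs) by (apply B_compl; auto; apply Hc; discriminate).
  assert (HrZ : rho I Zs = zeroE).
  { apply leE_0_eq. apply (Hint Zs HBZ). intros y [t [Ht ->]].
    rewrite (mx_ext tau _ (fun _ => False)). rewrite (mx_empty B tau Htau), (op_0r op one Hpm). apply leE_refl.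
    intros x; split; [|tauto]. intros [H1 H2]. apply H1. eapply leE_lt_trans; [apply leE_0|exact H2]. }
  destruct (rho_attained I Zs HI HBZ) as [L [HL HL0]]. rewrite HrZ in HL0.
  exists L. split; auto. intros S HS.
  assert (HBS : B S) by (apply (ideal_B I); auto).
  assert (HrS : rho I S = zeroE).
  { apply leE_0_eq. eapply leE_trans. apply (rho_le I S S HS).
    rewrite (mx_ext tau _ (fun _ => False)) by tauto. rewrite (mx_empty B tau Htau). apply leE_refl. }
  assert (Hpos : tau (fun x => S x /\ ltE zeroE (c x)) = zeroE).
  { rewrite (mx_ext tau _ (bigU (fun n x => S x /\ ltE (mkE (/ INR (Datatypes.S n))) (c x)))).
    - apply (mx_null_bigU B tau Htau). intros n; apply B_inter; auto; apply Hc, mkE_notInf.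
      intros n. assert (H0 : leE (op (mkE (/ INR (Datatypes.S n))) (tau (fun x => S x /\ ltE (mkE (/ INR (Datatypes.S n))) (c x)))) zeroE).
      { rewrite <- HrS. apply (Hint S HBS). exists (mkE (/ INR (Datatypes.S n))). split; auto. apply mkE_notInf. }
      apply leE_0_eq in H0. apply (op_nzd op one Hpm) in H0. destruct H0 as [H0|H0]; auto.
      exfalso. pose proof (mkE_pos _ (inv_S_pos n)) as Hp. rewrite H0 in Hp. exact (ltE_irrefl _ Hp).
    - intros x. split.
      + intros [H1 H2]. destruct (pos_exists_inv _ H2) as [k Hk]. exists k; auto.
      + intros [k [H1 H2]]. split; auto. eapply leE_lt_trans; [apply leE_0|exact H2]. }
  exists (fun x => (S x /\ ltE zeroE (c x)) \/ (Zs x /\ ~ L x)). split; [|split].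
  - apply B_union; auto. apply B_inter; auto; apply Hc; discriminate. apply B_diff; auto. apply (ideal_B I); auto.
  - apply (mx_null_union B tau Htau); auto. apply B_inter; auto; apply Hc; discriminate.
    apply B_diff; auto. apply (ideal_B I); auto.
  - intros x [H1 H2]. destruct (classic (ltE zeroE (c x))); [left|right]; auto.
Qed.

End SigmaPrincipal.


Definition half (b : ERp) : ERp :=
  match b with Fin x _ => mkE (x / 2) | Inf => mkE 1 end.
Lemma half_spec b : ltE zeroE b -> ltE zeroE (half b) /\ ltE (half b) b.
Proof.
  destruct b as [x p|]; unfold zeroE; cbn [ltE half]; intros H.
  - split; [apply mkE_pos; lra|]. rew_mkE. cbn [ltE]. lra.
  - split; [apply mkE_pos; lra|]. rew_mkE. cbn [ltE]. auto.
Qed.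

Definition hE (b : ERp) : ERp :=
  match b with Fin x _ => mkE (x / (1 + x)) | Inf => mkE 1 end.
Lemma hE_mono a b : leE a b -> leE (hE a) (hE b).
Proof.
  destruct a as [x p|], b as [y q|]; cbn [leE hE]; intros H; try contradiction.
  - assert (0 <= x / (1 + x)) by (unfold Rdiv; apply Rmult_le_pos; [lra|left; apply Rinv_0_lt_compat; lra]).
    assert (0 <= y / (1 + y)) by (unfold Rdiv; apply Rmult_le_pos; [lra|left; apply Rinv_0_lt_compat; lra]).
    rew_mkE. cbn [leE]. apply Rmult_le_reg_r with ((1 + x) * (1 + y)). nra.
    unfold Rdiv. replace (x * / (1 + x) * ((1 + x) * (1 + y))) with (x * (1 + y)) by (field; lra).
    replace (y * / (1 + y) * ((1 + x) * (1 + y))) with (y * (1 + x)) by (field; lra). nra.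
  - assert (0 <= x / (1 + x)) by (unfold Rdiv; apply Rmult_le_pos; [lra|left; apply Rinv_0_lt_compat; lra]).
    rew_mkE. cbn [leE]. apply Rmult_le_reg_r with (1 + x). lra.
    unfold Rdiv. replace (x * / (1 + x) * (1 + x)) with x by (field; lra). lra.
  - apply leE_refl.
Qed.
Lemma hE_lt b : ltE zeroE b -> ltE (hE b) b.
Proof.
  destruct b as [x p|]; unfold zeroE; cbn [ltE hE]; intros H.
  - assert (0 <= x / (1 + x)) by (unfold Rdiv; apply Rmult_le_pos; [lra|left; apply Rinv_0_lt_compat; lra]).
    rew_mkE. cbn [ltE]. apply Rmult_lt_reg_r with (1 + x). lra.
    unfold Rdiv. replace (x * / (1 + x) * (1 + x)) with x by (field; lra). nra.
  - rew_mkE. cbn [ltE]. auto.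
Qed.
Lemma hE_pos b : ltE zeroE b -> ltE zeroE (hE b).
Proof.
  destruct b as [x p|]; unfold zeroE; cbn [ltE hE]; intros H.
  - apply mkE_pos. unfold Rdiv; apply Rmult_lt_0_compat; [lra|apply Rinv_0_lt_compat; lra].
  - apply mkE_pos; lra.
Qed.
Lemma hE_0 : hE zeroE = zeroE.
Proof. unfold hE, zeroE. replace (0 / (1 + 0)) with 0 by field. unfold mkE. destruct (Rle_dec 0 0). apply Fin_eq; auto. lra. Qed.

Lemma leE_of_lt_all a b : (forall y, ltE y a -> ltE y b) -> leE a b.
Proof.
  intros H. apply leE_nlt. intros Hba. specialize (H b Hba). exact (ltE_irrefl _ H).
Qed.

Section SigmaFinite.
Context {E : Type} (B : (E -> Prop) -> Prop) (HB : sigma_algebra B).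
Context (op : ERp -> ERp -> ERp) (one : ERp) (Hpm : pseudo_mult op one).
Context (tau : (E -> Prop) -> ERp) (Htau : sigma_maxitive B tau).

Lemma dens_elem nu c A t : (forall A, B A -> integral_is op tau A c (nu A)) -> B A -> t <> Inf ->
  leE (op t (tau (fun x => A x /\ ltE t (c x)))) (nu A).
Proof. intros H HA Ht. apply (H A HA). eauto. Qed.

Definition If (A : E -> Prop) : Prop :=
  B A /\ exists Fs : nat -> E -> Prop,
    (forall n, B (Fs n) /\ ofinite op (tau (Fs n))) /\ (forall x, A x -> exists n, Fs n x).

Lemma If_sub A C : B A -> If C -> (forall x, A x -> C x) -> If A.
Proof.
  intros HA [HC [Fs [H1 H2]]] Hs. split; auto. exists Fs. split; auto.
Qed.

Lemma If_ofinite A : B A -> ofinite op (tau A) -> If A.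
Proof.
  intros HA Ho. split; auto. exists (fun _ => A). split; auto. intros x Hx. exists O; auto.
Qed.

Lemma If_bigU F : (forall n, If (F n)) -> If (bigU F).
Proof.
  intros H. split.
  - apply B_bigU; auto. intros n; apply H.
  - assert (Hex : forall n, exists Fs : nat -> E -> Prop,
      (forall k, B (Fs k) /\ ofinite op (tau (Fs k))) /\ (forall x, F n x -> exists k, Fs k x)).
    { intros n. apply H. }
    set (G := fun n => proj1_sig (constructive_indefinite_description _ (Hex n))).
    assert (HG : forall n, (forall k, B (G n k) /\ ofinite op (tau (G n k))) /\ (forall x, F n x -> exists k, G n k x)).
    { intros n. unfold G. destruct (constructive_indefinite_description _ _). auto. }
    exists (fun m => G (fst (Cantor.of_nat m)) (snd (Cantor.of_nat m))). split.
    + intros m. apply HG.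
    + intros x [n Hx]. destruct (proj2 (HG n) x Hx) as [k Hk].
      exists (Cantor.to_nat (n, k)). rewrite Cantor.cancel_of_to. simpl. exact Hk.
Qed.

Lemma RN_sigma_ofinite : RN_property op B tau -> sigma_ofinite op B tau.
Proof.
  intros HRN.
  destruct (classic (exists b, ltE zeroE b /\ forall u, ~ ofinite op u -> forall s, ltE zeroE s -> leE b (op s u)))
    as [[b [Hb HP]]|HnP].
  -
    set (nu := fun A => if excluded_middle_informative (If A) then zeroE else half b).
    assert (Hnu0 : forall A, If A -> nu A = zeroE).
    { intros A HA. unfold nu. destruct (excluded_middle_informative _); tauto. }
    assert (Hnu1 : forall A, ~ If A -> nu A = half b).
    { intros A HA. unfold nu. destruct (excluded_middle_informative _); tauto. }
    assert (Hmx : sigma_maxitive B nu).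
    { split.
      - apply Hnu0. apply If_ofinite. apply B_empty; auto. rewrite (mx_empty B tau Htau). apply (ofinite_0 op one Hpm).
      - intros F HF. destruct (classic (If (bigU F))) as [HU|HU].
        + rewrite (Hnu0 _ HU). split. intros y [n ->]. rewrite Hnu0. apply leE_refl.
          apply (If_sub _ _ (HF n) HU). intros x Hx; exists n; auto.
          intros; apply leE_0.
        + rewrite (Hnu1 _ HU). split.
          * intros y [n ->]. destruct (classic (If (F n))) as [Hn|Hn].
            rewrite Hnu0 by auto. apply leE_0. rewrite Hnu1 by auto. apply leE_refl.
          * intros m' Hm'. destruct (classic (forall n, If (F n))) as [Hall|Hall].
            exfalso. apply HU, If_bigU, Hall.
            apply not_all_ex_not in Hall. destruct Hall as [n Hn].
            rewrite <- (Hnu1 _ Hn). apply Hm'. eauto. }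
    assert (Hac : abs_cont op B nu tau).
    { intros A HA Ho. rewrite Hnu0. apply leE_0. apply If_ofinite; auto. }
    destruct (HRN nu Hmx Hac) as [c [Hc Hint]].
    destruct (classic (If (fun _ => True))) as [HT|HT].
    { destruct HT as [_ [Fs [H1 H2]]]. exists Fs. split; auto. }
    exfalso.
    set (Zs := fun x => ~ ltE zeroE (c x)).
    assert (HBZ : B Zs) by (apply B_compl; auto; apply Hc; discriminate).
    assert (HZ : If Zs).
    { apply NNPP. intros HnZ. pose proof (Hnu1 _ HnZ) as Heq.
      assert (Hle : leE (nu Zs) zeroE).
      { apply (Hint Zs HBZ). intros y [t [Ht ->]].
        rewrite (mx_ext tau _ (fun _ => False)). rewrite (mx_empty B tau Htau), (op_0r op one Hpm). apply leE_refl.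
        intros x; split; [|tauto]. intros [H1 H2]. apply H1. eapply leE_lt_trans; [apply leE_0|exact H2]. }
      rewrite Heq in Hle. pose proof (proj1 (half_spec b Hb)) as Hh.
      apply (ltE_irrefl zeroE). eapply ltE_le_trans; eauto. }
    set (D := fun n x => ltE (mkE (/ INR (S n))) (c x)).
    assert (HBD : forall n, B (D n)) by (intros n; apply Hc, mkE_notInf).
    assert (Hex : exists n, ~ If (D n)).
    { apply NNPP. intros Hn. apply HT.
      apply (If_sub _ (bigU (fun n => match n with O => Zs | S k => D k end))). apply B_full; auto.
      apply If_bigU. intros [|k]; auto. apply NNPP. intros Hk. apply Hn. eauto.
      intros x _. destruct (classic (ltE zeroE (c x))) as [Hx|Hx].
      destruct (pos_exists_inv _ Hx) as [k Hk]. exists (S k). exact Hk.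
      exists O. exact Hx. }
    destruct Hex as [n Hn].
    assert (Hno : ~ ofinite op (tau (D n))) by (intros Ho; apply Hn, If_ofinite; auto).
    pose proof (dens_elem nu c (D n) (mkE (/ INR (S n))) Hint (HBD n) (mkE_notInf _)) as H1.
    rewrite (mx_ext tau _ (D n)) in H1 by (intros x; unfold D; tauto).
    rewrite (Hnu1 _ Hn) in H1.
    pose proof (HP _ Hno _ (mkE_pos _ (inv_S_pos n))) as H2.
    pose proof (proj2 (half_spec b Hb)) as H3.
    apply (ltE_irrefl b). eapply leE_lt_trans; [|exact H3]. eapply leE_trans; eauto.
  -
    set (X := fun v y => exists w z, ltE w v /\ (forall s, ltE zeroE s -> leE z (op s w)) /\ y = hE z).
    set (nuv := fun v => supE (X v)).
    set (nu := fun A => nuv (tau A)).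
    assert (Hmono : forall v v', leE v v' -> leE (nuv v) (nuv v')).
    { intros v v' Hv. apply (supE_spec (X v)). intros y (w & z & Hw & Hz & ->).
      apply (supE_spec (X v')). exists w, z. split; auto. eapply ltE_le_trans; eauto. }
    assert (Hmx : sigma_maxitive B nu).
    { split.
      - apply leE_0_eq. unfold nu, nuv. rewrite (mx_empty B tau Htau). apply (supE_spec _).
        intros y (w & z & Hw & _ & _). exfalso. apply (ltE_irrefl zeroE). eapply leE_lt_trans; [apply leE_0|exact Hw].
      - intros F HF. split.
        + intros y [n ->]. apply Hmono. apply (mx_ub B tau Htau); auto.
        + intros m' Hm'. unfold nu, nuv. apply (supE_spec _). intros y (w & z & Hw & Hz & ->).
          destruct (sup_lt _ _ _ (mx_sup B tau Htau F HF) Hw) as [y [[n ->] Hn]].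
          eapply leE_trans; [|apply Hm'; exists n; reflexivity].
          apply (supE_spec _). exists w, z. auto. }
    assert (Hac : abs_cont op B nu tau).
    { intros A HA Ho. eapply leE_trans; [|apply leE_0]. unfold nu, nuv. apply (supE_spec _).
      intros y (w & z & Hw & Hz & ->).
      assert (Hw0 : ofinite op w) by (eapply ofinite_down; eauto; apply ltE_leE; auto).
      rewrite (ofinite_lb op w z Hw0 Hz), hE_0. apply leE_refl. }
    destruct (HRN nu Hmx Hac) as [c [Hc Hint]].
    set (Zs := fun x => ~ ltE zeroE (c x)).
    assert (HBZ : B Zs) by (apply B_compl; auto; apply Hc; discriminate).
    set (D := fun n x => ltE (mkE (/ INR (S n))) (c x)).
    assert (HBD : forall n, B (D n)) by (intros n; apply Hc, mkE_notInf).
    assert (Hkey : forall u, ~ ofinite op u -> forall o, is_infE (fun y => exists s, ltE zeroE s /\ y = op s u) o ->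
              leE (nuv u) (hE o)).
    { intros u Hu o Ho. apply (supE_spec _). intros y (w & z & Hw & Hz & ->). apply hE_mono.
      apply Ho. intros y [s [Hs ->]]. apply leE_trans with (op s w). apply Hz, Hs. apply (op_monor op one Hpm), ltE_leE, Hw. }
    assert (HintZ : nu Zs = zeroE).
    { apply leE_0_eq. apply (Hint Zs HBZ). intros y [t [Ht ->]].
      rewrite (mx_ext tau _ (fun _ => False)). rewrite (mx_empty B tau Htau), (op_0r op one Hpm). apply leE_refl.
      intros x; split; [|tauto]. intros [H1 H2]. apply H1. eapply leE_lt_trans; [apply leE_0|exact H2]. }
    exists (fun n => match n with O => Zs | S k => D k end). split.
    + intros [|n].
      * split; auto. apply NNPP. intros Hu.
        destruct (inf_exists (fun y => exists s, ltE zeroE s /\ y = op s (tau Zs))) as [o Ho].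
        pose proof (not_ofinite_lb op (tau Zs) o Hu Ho) as Ho0.
        destruct (classic (exists u' s, ~ ofinite op u' /\ ltE zeroE s /\ ltE (op s u') o)) as [Hex|Hn2].
        2:{ apply HnP. exists o. split; auto. intros u Hu2 s Hs. apply leE_nlt. intros Hlt. apply Hn2. eauto. }
        destruct Hex as (u' & s & Hu' & Hs & Hsu).
        assert (Hlt : ltE u' (tau Zs)).
        { apply ltE_nle. intros Hle. apply (ltE_irrefl o). eapply leE_lt_trans; [|exact Hsu].
          apply leE_trans with (op s (tau Zs)). apply Ho. eauto. apply (op_monor op one Hpm); auto. }
        destruct (inf_exists (fun y => exists s, ltE zeroE s /\ y = op s u')) as [o' Ho'].
        pose proof (not_ofinite_lb op u' o' Hu' Ho') as Ho'0.
        assert (Hel : leE (hE o') (nu Zs)).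
        { apply (supE_spec _). exists u', o'. split; auto. split; auto. intros s0 Hs0. apply Ho'. eauto. }
        rewrite HintZ in Hel. apply (ltE_irrefl zeroE). eapply ltE_le_trans; [apply hE_pos; exact Ho'0|exact Hel].
      * split; auto. apply NNPP. intros Hu.
        destruct (inf_exists (fun y => exists s, ltE zeroE s /\ y = op s (tau (D n)))) as [o Ho].
        pose proof (not_ofinite_lb op _ o Hu Ho) as Ho0.
        pose proof (Hkey _ Hu o Ho) as H1.
        pose proof (dens_elem nu c (D n) (mkE (/ INR (S n))) Hint (HBD n) (mkE_notInf _)) as H2.
        rewrite (mx_ext tau _ (D n)) in H2 by (intros x; unfold D; tauto).
        assert (H3 : leE o (op (mkE (/ INR (S n))) (tau (D n)))).
        { apply Ho. exists (mkE (/ INR (S n))). split; auto. apply mkE_pos, inv_S_pos. }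
        apply (ltE_irrefl o). eapply leE_lt_trans; [|apply (hE_lt o Ho0)].
        eapply leE_trans; [exact H3|]. eapply leE_trans; [exact H2|exact H1].
    + intros x. destruct (classic (ltE zeroE (c x))) as [Hx|Hx].
      destruct (pos_exists_inv _ Hx) as [k Hk]. exists (S k). exact Hk.
      exists O. exact Hx.
Qed.
End SigmaFinite.


Definition rseq (n : nat) : R := INR (fst (Cantor.of_nat n)) / INR (S (snd (Cantor.of_nat n))).
Lemma rseq_nonneg n : 0 <= rseq n.
Proof.
  unfold rseq. apply Rmult_le_pos. apply pos_INR. left. apply Rinv_0_lt_compat, lt_0_INR. lia.
Qed.
Lemma rseq_dense a b : 0 <= a -> a < b -> exists n, a < rseq n < b.
Proof.
  intros Ha Hab. destruct (exists_inv_lt (b - a) ltac:(lra)) as [N HN].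
  set (d := INR (S N)). assert (Hd : 0 < d) by (apply lt_0_INR; lia).
  destruct (archimed (a * d)) as [H1 H2].
  assert (Hp : (0 <= up (a * d))%Z) by (apply le_IZR; simpl; nra).
  exists (Cantor.to_nat (Z.to_nat (up (a * d)), N)). unfold rseq. rewrite Cantor.cancel_of_to. simpl fst; simpl snd.
  fold d. rewrite INR_IZR_INZ, Z2Nat.id by auto.
  assert (Hinv : / d < b - a) by exact HN.
  split.
  - apply Rmult_lt_reg_r with d; auto. unfold Rdiv. rewrite Rmult_assoc, Rinv_l, Rmult_1_r by lra. lra.
  - apply Rmult_lt_reg_r with d; auto. unfold Rdiv. rewrite Rmult_assoc, Rinv_l, Rmult_1_r by lra.
    assert (/ d * d = 1) by (field; lra).
    assert (1 < (b - a) * d). { apply Rmult_lt_compat_r with (r := d) in Hinv; auto. lra. }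
    nra.
Qed.
Definition rE (n : nat) : ERp := mkE (rseq n).
Lemma rE_Fin n : rE n = Fin (rseq n) (rseq_nonneg n).
Proof. apply mkE_Fin. Qed.

Lemma B_const {E : Type} (B : (E -> Prop) -> Prop) (HB : sigma_algebra B) (P : Prop) : B (fun _ => P).
Proof.
  destruct (classic P) as [H|H].
  - apply (B_ext B) with (fun _ => True). intros; tauto. apply B_full; auto.
  - apply (B_ext B) with (fun _ => False). intros; tauto. apply B_empty; auto.
Qed.

Section RN.
Context {E : Type} (B : (E -> Prop) -> Prop) (HB : sigma_algebra B).
Context (op : ERp -> ERp -> ERp) (one : ERp) (Hpm : pseudo_mult op one).
Context (tau : (E -> Prop) -> ERp) (Htau : sigma_maxitive B tau).
Context (Hfin : sigma_ofinite op B tau) (Hpr : sigma_principal B tau).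
Context (nu : (E -> Prop) -> ERp) (Hnu : sigma_maxitive B nu) (Hac : abs_cont op B nu tau).

Definition Igood (n : nat) (A : E -> Prop) : Prop :=
  B A /\ forall A', B A' -> (forall x, A' x -> A x) -> leE (nu A') (op (rE n) (tau A')).

Lemma Igood_ideal n : sigma_ideal B (Igood n).
Proof.
  split; [|split; [|split]].
  - exists (fun _ => False). split. apply B_empty; auto. intros A' HA' Hs.
    apply leE_trans with (nu (fun _ => False)).
    apply (mx_mono B nu Hnu); auto. apply B_empty; auto.
    rewrite (mx_empty B nu Hnu). apply leE_0.
  - intros A [H _]; auto.
  - intros F HF. split. apply B_bigU; auto. intros k; apply HF.
    intros A' HA' Hs.
    rewrite (mx_ext nu A' (bigU (fun k x => A' x /\ F k x))).
    2:{ intros x; split. intros Hx. destruct (Hs x Hx) as [k Hk]. exists k; auto. intros [k [H1 _]]; auto. }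
    apply (mx_least B nu Hnu). intros k; apply B_inter; auto; apply HF.
    intros k. apply leE_trans with (op (rE n) (tau (fun x => A' x /\ F k x))).
    + apply (proj2 (HF k)). apply B_inter; auto; apply HF. intros x [_ H]; auto.
    + apply (op_monor op one Hpm). apply (mx_mono B tau Htau); auto. apply B_inter; auto; apply HF. intros x [H _]; auto.
  - intros A C HA [HC H] Hs. split; auto.
Qed.

Lemma Igood_mono n m A : rseq n <= rseq m -> Igood n A -> Igood m A.
Proof.
  intros Hr [HA H]. split; auto. intros A' HA' Hs. eapply leE_trans. apply H; auto.
  apply (op_monol op one Hpm). rewrite !rE_Fin. cbn [leE]. auto.
Qed.

Lemma Lex : forall n, exists L, Igood n L /\ forall S, Igood n S -> negligible B tau (fun x => S x /\ ~ L x).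
Proof. intros n. apply Hpr, Igood_ideal. Qed.
Definition Lf (n : nat) : E -> Prop := proj1_sig (constructive_indefinite_description _ (Lex n)).
Lemma Lf_spec n : Igood n (Lf n) /\ forall S, Igood n S -> negligible B tau (fun x => S x /\ ~ Lf n x).
Proof. unfold Lf. destruct (constructive_indefinite_description _ _). auto. Qed.

Definition Mset (n : nat) : E -> Prop :=
  bigU (fun m x => rseq m <= rseq n /\ Lf m x).

Lemma Mset_B n : B (Mset n).
Proof.
  unfold Mset. apply B_bigU; auto. intros m. apply (B_ext B) with (fun x => (fun _ => rseq m <= rseq n) x /\ Lf m x).
  intros; tauto. apply B_inter; auto. apply B_const; auto. apply (proj1 (Lf_spec m)).
Qed.

Lemma Mset_good n : Igood n (Mset n).
Proof.
  unfold Mset. apply (proj1 (proj2 (proj2 (Igood_ideal n)))). intros m. destruct (Rle_dec (rseq m) (rseq n)) as [Hr|Hr].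
  - apply (proj2 (proj2 (proj2 (Igood_ideal n)))) with (Lf m).
    + apply (B_ext B) with (fun x => (fun _ => rseq m <= rseq n) x /\ Lf m x). intros; tauto.
      apply B_inter; auto. apply B_const; auto. apply (proj1 (Lf_spec m)).
    + apply (Igood_mono m n); auto. apply Lf_spec.
    + intros x [_ H]; auto.
  - apply (proj2 (proj2 (proj2 (Igood_ideal n)))) with (fun _ => False).
    + apply (B_ext B) with (fun _ => False). intros; tauto. apply B_empty; auto.
    + destruct (proj1 (Igood_ideal n)) as [A0 HA0].
      apply (proj2 (proj2 (proj2 (Igood_ideal n)))) with A0; auto. apply B_empty; auto. intros x [].
    + intros x [H _]; contradiction.
Qed.

Lemma Mset_mono n n' x : rseq n <= rseq n' -> Mset n x -> Mset n' x.
Proof. intros Hr [m [H1 H2]]. exists m. split; auto. lra. Qed.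

Lemma Mset_ess n S : Igood n S -> negligible B tau (fun x => S x /\ ~ Mset n x).
Proof.
  intros HS. destruct (proj2 (Lf_spec n) S HS) as [C [HC1 [HC2 HC3]]].
  exists C. split; auto. split; auto. intros x [H1 H2]. apply HC3. split; auto.
  intros H3. apply H2. exists n. split; auto. lra.
Qed.

Definition cden (x : E) : ERp := infE (fun y => exists n, Mset n x /\ y = rE n).

Lemma cden_lt x b : ltE (cden x) b -> exists n, Mset n x /\ ltE (rE n) b.
Proof.
  intros H. destruct (inf_gt _ _ _ (infE_spec _) H) as [y [[n [Hn ->]] Hy]]. eauto.
Qed.
Lemma cden_le x n : Mset n x -> leE (cden x) (rE n).
Proof. intros H. apply (infE_spec _). eauto. Qed.

Lemma cden_meas : measurable B cden.
Proof.
  intros [t0 p|] Ht; [|congruence].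
  apply (B_ext B) with (bigU (fun m x => t0 < rseq m /\ ~ Mset m x)).
  - intros x. split.
    + intros [m [H1 H2]]. apply ltE_nle. intros Hle.
      assert (Hl : ltE (cden x) (rE m)) by (eapply leE_lt_trans; [exact Hle|]; rewrite rE_Fin; cbn [ltE]; auto).
      destruct (cden_lt x _ Hl) as [n [Hn Hnm]]. rewrite !rE_Fin in Hnm. cbn [ltE] in Hnm.
      apply H2. apply (Mset_mono n); auto. lra.
    + intros H. destruct (cden x) as [y q|] eqn:Hc.
      * cbn [ltE] in H. destruct (rseq_dense t0 y p H) as [m Hm]. exists m. split; [lra|].
        intros HM. pose proof (cden_le x m HM) as H2. rewrite Hc, rE_Fin in H2. cbn [leE] in H2. lra.
      * destruct (rseq_dense t0 (t0 + 1) p ltac:(lra)) as [m Hm]. exists m. split; [lra|].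
        intros HM. pose proof (cden_le x m HM) as H2. rewrite Hc, rE_Fin in H2. cbn [leE] in H2. auto.
  - apply B_bigU; auto. intros m. apply B_inter; auto. apply B_const; auto. apply B_compl; auto. apply Mset_B.
Qed.

Lemma K_bound H b : 0 <= b -> B H -> (forall x, H x -> ltE (cden x) (mkE b)) ->
  leE (nu H) (op (mkE b) (tau H)).
Proof.
  intros Hb HH Hs.
  rewrite (mx_ext nu H (bigU (fun n x => H x /\ Mset n x /\ rseq n < b))).
  2:{ intros x; split.
      - intros Hx. destruct (cden_lt x _ (Hs x Hx)) as [n [Hn Hnb]]. exists n. split; auto. split; auto.
        rewrite rE_Fin in Hnb. rew_mkE_in Hnb. cbn [ltE] in Hnb. auto.
      - intros [n [Hx _]]; auto. }
  apply (mx_least B nu Hnu).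
  - intros n. apply B_inter; auto. apply B_inter; auto. apply Mset_B. apply B_const; auto.
  - intros n. eapply leE_trans. apply (proj2 (Mset_good n)).
    apply B_inter; auto. apply B_inter; auto. apply Mset_B. apply B_const; auto.
    intros x [_ [Hx _]]; auto.
    destruct (classic (rseq n < b)) as [Hr|Hr].
    + apply (op_mono op one Hpm). rewrite rE_Fin. rew_mkE. cbn [leE]. lra.
      apply (mx_mono B tau Htau). apply B_inter; auto. apply B_inter; auto. apply Mset_B. apply B_const; auto.
      auto. intros x [Hx _]; auto.
    + rewrite (mx_ext tau _ (fun _ => False)) by (intros x; cbv beta; tauto).
      rewrite (mx_empty B tau Htau), (op_0r op one Hpm). apply leE_0.
Qed.

Lemma lower_bound A t : B A -> t <> Inf ->
  leE (op t (tau (fun x => A x /\ ltE t (cden x)))) (nu A).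
Proof.
  intros HA Ht.
  set (G := fun x => A x /\ ltE t (cden x)).
  assert (HBG : B G) by (apply B_inter; auto; apply cden_meas; auto).
  apply leE_trans with (nu G); [| apply (mx_mono B nu Hnu); auto; intros x [H _]; auto].
  apply leE_nlt. intros Hlt.
  destruct t as [t0 p|]; [|congruence].
  destruct (Req_dec t0 0) as [Ht0|Ht0].
  { subst t0. replace (Fin 0 p) with zeroE in Hlt by (apply Fin_eq; auto). rewrite (op_0l op one Hpm) in Hlt.
    exact (ltE_irrefl _ (leE_lt_trans _ _ _ (leE_0 _) Hlt)). }
  assert (Ht0p : 0 < t0) by lra.
  destruct (op_left_open op one Hpm (Fin t0 p) (tau G) (nu G) ltac:(unfold zeroE; cbn [ltE]; lra) Hlt)
    as [U [HU HUs]].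
  cbn [nbhd] in HU. destruct HU as [eps [He Heps]].
  destruct (rseq_dense (Rmax (t0 - eps) 0) t0 (Rmax_r _ _) ltac:(apply Rmax_lub_lt; lra)) as [n [Hn1 Hn2]].
  pose proof (Rmax_l (t0 - eps) 0) as Hm1.
  assert (Hr : ltE (nu G) (op (rE n) (tau G))).
  { apply HUs. rewrite rE_Fin. apply Heps. rewrite Rabs_left1; lra.
    rewrite rE_Fin. unfold zeroE; cbn [ltE]. pose proof (Rmax_r (t0 - eps) 0). lra. }
  set (r := rE n) in *.
  assert (Hrpos : pos_finite r) by (unfold r; rewrite rE_Fin; cbn [pos_finite]; pose proof (Rmax_r (t0 - eps) 0); lra).
  set (J := fun H => B H /\ exists H', B H' /\ (forall x, H x -> H' x) /\ (forall x, H' x -> G x) /\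
                      leE (op r (tau H')) (nu H')).
  assert (HJ : sigma_ideal B J).
  { split; [|split; [|split]].
    - exists (fun _ => False). split. apply B_empty; auto. exists (fun _ => False).
      split. apply B_empty; auto. split. auto. split. intros x [].
      rewrite (mx_empty B tau Htau), (op_0r op one Hpm). apply leE_0.
    - intros H [HH _]; auto.
    - intros F HF. split. apply B_bigU; auto. intros k; apply HF.
      assert (Hex : forall k, exists H', B H' /\ (forall x, F k x -> H' x) /\ (forall x, H' x -> G x) /\
                      leE (op r (tau H')) (nu H')) by (intros k; apply HF).
      set (Hk := fun k => proj1_sig (constructive_indefinite_description _ (Hex k))).
      assert (HHk : forall k, B (Hk k) /\ (forall x, F k x -> Hk k x) /\ (forall x, Hk k x -> G x) /\
                      leE (op r (tau (Hk k))) (nu (Hk k))).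
      { intros k. unfold Hk. destruct (constructive_indefinite_description _ _). auto. }
      exists (bigU Hk). split. apply B_bigU; auto. intros k; apply HHk.
      split. intros x [k Hx]. exists k. apply HHk; auto.
      split. intros x [k Hx]. eapply HHk; eauto.
      apply (op_sup_r_least op one Hpm r (fun y => exists k, y = tau (Hk k))); auto.
      apply (mx_sup B tau Htau). intros k; apply HHk.
      exists (tau (Hk O)); eauto.
      intros y [k ->]. eapply leE_trans. apply HHk. apply (mx_ub B nu Hnu). intros j; apply HHk.
    - intros A0 C HA0 [HC [H' [H1 [H2 [H3 H4]]]]] Hs. split; auto. exists H'. split; auto. }
  destruct (Hpr J HJ) as [L [HL HLess]].
  destruct HL as [HBL [H' [HBH' [HLH' [HH'G HH'op]]]]].
  set (G' := fun x => G x /\ ~ L x).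
  assert (HBG' : B G') by (apply B_diff; auto).
  assert (Hgood : Igood n G').
  { split; auto. intros A' HA' Hs. apply leE_nlt. intros Hbad.
    assert (HJA : J A').
    { split; auto. exists A'. split; auto. split; auto. split. intros x Hx; apply Hs; auto.
      apply ltE_leE; auto. }
    destruct (HLess A' HJA) as [C2 [HC2 [HC20 HC2s]]].
    assert (Hz : tau A' = zeroE).
    { apply (mx_null_sub B tau Htau A' C2); auto. intros x Hx. apply HC2s. split; auto. apply Hs; auto. }
    assert (Hn0 : leE (nu A') zeroE).
    { eapply leE_trans. apply Hac; auto. rewrite Hz. apply (ofinite_0 op one Hpm).
      rewrite Hz, (op_0r op one Hpm). apply leE_refl. }
    fold r in Hbad. rewrite Hz, (op_0r op one Hpm) in Hbad.
    exact (ltE_irrefl _ (ltE_le_trans _ _ _ Hbad Hn0)). }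
  destruct (Mset_ess n G' Hgood) as [C [HC [HC0 HCs]]].
  assert (HG'0 : tau G' = zeroE).
  { apply (mx_null_sub B tau Htau G' C); auto. intros x Hx. apply HCs. split; auto.
    intros HM. pose proof (cden_le x n HM) as H1. destruct Hx as [[_ H2] _].
    pose proof (ltE_le_trans _ _ _ H2 H1) as H3. rewrite rE_Fin in H3. cbn [ltE] in H3. lra. }
  assert (HGH : leE (tau G) (tau H')).
  { apply leE_trans with (tau (fun x => G' x \/ H' x)).
    apply (mx_mono B tau Htau); auto. apply B_union; auto.
    intros x Hx. destruct (classic (L x)); [right; auto|left; split; auto].
    apply (mx_union_least B tau Htau); auto. rewrite HG'0; apply leE_0. apply leE_refl. }
  apply (ltE_irrefl (nu G)). eapply ltE_le_trans; [exact Hr|].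
  eapply leE_trans. apply (op_monor op one Hpm), HGH.
  eapply leE_trans. exact HH'op. apply (mx_mono B nu Hnu); auto.
Qed.

Lemma B_lt b : 0 < b -> B (fun x => ltE (cden x) (mkE b)).
Proof.
  intros Hb. apply (B_ext B) with (bigU (fun n x => ~ ltE (mkE (b - / INR (S n))) (cden x))).
  - intros x. split.
    + intros [n Hn]. apply leE_nlt in Hn. eapply leE_lt_trans; [exact Hn|].
      pose proof (inv_S_pos n). unfold mkE at 1. destruct (Rle_dec 0 (b - / INR (S n))).
      * rew_mkE. cbn [ltE]. lra.
      * rew_mkE. unfold zeroE. cbn [ltE]. lra.
    + intros H. destruct (cden x) as [y q|] eqn:Hc.
      * rew_mkE_in H. cbn [ltE] in H. destruct (exists_inv_lt (b - y) ltac:(lra)) as [k Hk].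
        exists k. rewrite Hc. apply leE_nlt. rew_mkE. cbn [leE]. lra.
      * rew_mkE_in H. cbn [ltE] in H. contradiction.
  - apply B_bigU; auto. intros n. apply B_compl; auto. apply cden_meas, mkE_notInf.
Qed.

Lemma exists_nat_gt y : 0 <= y -> exists n, y < INR (S n).
Proof.
  intros Hy. destruct (archimed y) as [H1 H2].
  assert (Hp : (0 <= up y)%Z) by (apply le_IZR; simpl; lra).
  exists (Z.to_nat (up y)). rewrite S_INR, INR_IZR_INZ, Z2Nat.id by auto. lra.
Qed.

Lemma B_Inf : B (fun x => cden x = Inf).
Proof.
  apply (B_ext B) with (fun x => ~ bigU (fun n x => ltE (cden x) (mkE (INR (S n)))) x).
  - intros x. split.
    + intros H. destruct (cden x) as [y q|] eqn:Hc; auto. exfalso. apply H.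
      destruct (exists_nat_gt y q) as [n Hn]. exists n. rewrite Hc.
      assert (0 <= INR (S n)) by apply pos_INR. rew_mkE. cbn [ltE]. auto.
    + intros H [n Hn]. rewrite H in Hn. assert (0 <= INR (S n)) by apply pos_INR. rew_mkE_in Hn. cbn [ltE] in Hn. auto.
  - apply B_compl; auto. apply B_bigU; auto. intros n. apply B_lt. apply lt_0_INR. lia.
Qed.

Definition piece (A : E -> Prop) (a b : R) : E -> Prop :=
  fun x => A x /\ ltE (mkE a) (cden x) /\ ltE (cden x) (mkE b).

Lemma piece_B A a b : B A -> 0 < b -> B (piece A a b).
Proof.
  intros HA Hb. unfold piece. apply B_inter; auto. apply B_inter; auto. apply cden_meas, mkE_notInf. apply B_lt; auto.
Qed.

Lemma piece_sub A a b a' b' : 0 <= a -> a <= a' -> b' <= b -> 0 <= b' -> forall x, piece A a' b' x -> piece A a b x.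
Proof.
  intros H1 H2 H3 H4 x [Hx [Ha Hb]]. split; auto. split.
  - eapply leE_lt_trans; [|exact Ha]. rew_mkE. cbn [leE]. auto.
  - eapply ltE_le_trans; [exact Hb|]. rew_mkE. cbn [leE]. auto.
Qed.

Lemma bisect A m' a0 b0 : B A -> ofinite op (tau A) ->
  (forall t, t <> Inf -> leE (op t (tau (fun x => A x /\ ltE t (cden x)))) m') ->
  0 <= a0 -> a0 < b0 -> ltE m' (nu (piece A a0 b0)) -> False.
Proof.
  intros HA Hof Hm' Ha0 Hab Hw.
  set (w := nu (piece A a0 b0)) in *.
  assert (Hw0 : ltE zeroE w) by (eapply leE_lt_trans; [apply leE_0|exact Hw]).
  set (step := fun p : R * R => let a := fst p in let b := snd p in
     if excluded_middle_informative (leE w (nu (piece A a (a + 2 * (b - a) / 3))))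
     then (a, a + 2 * (b - a) / 3) else (a + (b - a) / 3, b)).
  set (sq := fun k => Nat.iter k step (a0, b0)).
  set (ak := fun k => fst (sq k)). set (bk := fun k => snd (sq k)).
  assert (Hstep : forall k,
    (ak (S k) = ak k /\ bk (S k) = ak k + 2 * (bk k - ak k) / 3 /\
       leE w (nu (piece A (ak k) (ak k + 2 * (bk k - ak k) / 3)))) \/
    (ak (S k) = ak k + (bk k - ak k) / 3 /\ bk (S k) = bk k /\
       ~ leE w (nu (piece A (ak k) (ak k + 2 * (bk k - ak k) / 3))))).
  { intros k. unfold ak, bk. change (sq (S k)) with (step (sq k)). unfold step.
    destruct (excluded_middle_informative _); [left|right]; simpl; auto. }
  assert (Hinv : forall k, 0 <= ak k /\ ak k < bk k /\ bk k - ak k = (2/3)^k * (b0 - a0) /\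
                           leE w (nu (piece A (ak k) (bk k)))).
  { induction k.
    - unfold ak, bk, sq; simpl. split; [lra|split;[lra|split;[lra|apply leE_refl]]].
    - destruct IHk as (I1 & I2 & I3 & I4).
      destruct (Hstep k) as [(S1 & S2 & S3)|(S1 & S2 & S3)]; rewrite S1, S2.
      + split; [lra|split;[lra|split]]. simpl pow. rewrite Rmult_assoc, <- I3. lra. exact S3.
      + split; [lra|split;[lra|split]]. simpl pow. rewrite Rmult_assoc, <- I3. lra.
        set (a := ak k) in *. set (b := bk k) in *.
        assert (Hcov : forall x, piece A a b x -> piece A a (a + 2 * (b - a) / 3) x \/ piece A (a + (b - a) / 3) b x).
        { intros x [Hx [H1 H2]]. destruct (cden x) as [y q|] eqn:Hc.
          - destruct (Rlt_dec y (a + 2 * (b - a) / 3)).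
            + left. split; auto. rewrite Hc. split; auto. rew_mkE. cbn [ltE]. auto.
            + right. split; auto. rewrite Hc. split; auto. rew_mkE. cbn [ltE]. lra.
          - rew_mkE_in H2. cbn [ltE] in H2. contradiction. }
        assert (HBl : B (piece A a (a + 2 * (b - a) / 3))) by (apply piece_B; auto; lra).
        assert (HBr : B (piece A (a + (b - a) / 3) b)) by (apply piece_B; auto; lra).
        assert (HBp : B (piece A a b)) by (apply piece_B; auto; lra).
        apply leE_nlt. intros Hr. apply (proj2 (ltE_nle _ _)) in S3.
        assert (Hu : leE w (nu (fun x => piece A a (a + 2 * (b - a) / 3) x \/ piece A (a + (b - a) / 3) b x))).
        { eapply leE_trans; [exact I4|]. apply (mx_mono B nu Hnu); auto. apply B_union; auto. }
        destruct (leE_total (nu (piece A a (a + 2 * (b - a) / 3))) (nu (piece A (a + (b - a) / 3) b))) as [Hlr|Hrl].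
        * apply (ltE_irrefl w). eapply leE_lt_trans; [|exact Hr]. eapply leE_trans; [exact Hu|].
          apply (mx_union_least B nu Hnu); auto. apply leE_refl.
        * apply (ltE_irrefl w). eapply leE_lt_trans; [|exact S3]. eapply leE_trans; [exact Hu|].
          apply (mx_union_least B nu Hnu); auto. apply leE_refl. }
  assert (Hamono : forall k, ak k <= ak (S k)).
  { intros k. destruct (Hinv k) as (_ & I2 & _). destruct (Hstep k) as [(S1 & _)|(S1 & _)]; rewrite S1; lra. }
  assert (Hbmono : forall k, bk (S k) <= bk k).
  { intros k. destruct (Hinv k) as (_ & I2 & _). destruct (Hstep k) as [(_ & S2 & _)|(_ & S2 & _)]; rewrite S2; lra. }
  assert (Hamono' : forall k k', (k <= k')%nat -> ak k <= ak k').
  { intros k k' Hk. induction Hk. lra. specialize (Hamono m). lra. }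
  assert (Hbmono' : forall k k', (k <= k')%nat -> bk k' <= bk k).
  { intros k k' Hk. induction Hk. lra. specialize (Hbmono m). lra. }
  assert (Hab' : forall j k, ak j < bk k).
  { intros j k. destruct (Hinv (Nat.max j k)) as (_ & I2 & _).
    pose proof (Hamono' j (Nat.max j k) ltac:(lia)). pose proof (Hbmono' k (Nat.max j k) ltac:(lia)). lra. }
  destruct (completeness (fun x => exists k, x = ak k)) as [st [Hst1 Hst2]].
  { exists (bk O). intros x [k ->]. left. apply Hab'. }
  { exists (ak O). eauto. }
  assert (Hs1 : forall k, ak k <= st) by (intros k; apply Hst1; eauto).
  assert (Hs2 : forall k, st <= bk k).
  { intros k. apply Hst2. intros x [j ->]. left. apply Hab'. }
  assert (Hst0 : 0 <= st) by (pose proof (Hs1 O); pose proof (proj1 (Hinv O)); lra).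
  assert (Hconv : forall eps, 0 < eps -> exists K, forall k, (K <= k)%nat -> bk k - ak k < eps).
  { intros eps He. destruct (pow_lt_1_zero (2/3) ltac:(rewrite Rabs_right; lra) (eps / (b0 - a0)) ltac:(apply Rdiv_lt_0_compat; lra))
      as [N HN]. exists N. intros k Hk. specialize (HN k Hk). rewrite Rabs_right in HN by (apply Rle_ge, pow_le; lra).
    destruct (Hinv k) as (_ & _ & I3 & _). rewrite I3.
    apply Rmult_lt_compat_r with (r := b0 - a0) in HN; [|lra].
    replace (eps / (b0 - a0) * (b0 - a0)) with eps in HN by (field; lra). exact HN. }
  set (u := fun k => tau (piece A (ak k) (bk k))).
  assert (HBpk : forall k, B (piece A (ak k) (bk k))).
  { intros k. destruct (Hinv k) as (I1 & I2 & _). apply piece_B; auto; lra. }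
  assert (Hudec : forall k, leE (u (S k)) (u k)).
  { intros k. unfold u. apply (mx_mono B tau Htau); auto.
    destruct (Hinv k) as (I1 & I2 & _). destruct (Hinv (S k)) as (J1 & J2 & _).
    apply piece_sub; auto; lra. }
  assert (HF1 : forall k, leE w (op (mkE (bk k)) (u k))).
  { intros k. destruct (Hinv k) as (I1 & I2 & _ & I4). eapply leE_trans; [exact I4|].
    apply K_bound; auto. lra. intros x [_ [_ Hx]]; auto. }
  assert (HF2 : forall k, leE (op (mkE (ak k)) (u k)) m').
  { intros k. eapply leE_trans; [|apply (Hm' (mkE (ak k)) (mkE_notInf _))].
    apply (op_monor op one Hpm). apply (mx_mono B tau Htau); auto.
    apply B_inter; auto. apply cden_meas, mkE_notInf.
    intros x [Hx [Ha _]]. split; auto. }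
  assert (HuA : forall k, leE (u k) (tau A)).
  { intros k. apply (mx_mono B tau Htau); auto. intros x [Hx _]; auto. }
  destruct (Req_dec st 0) as [Hst|Hst].
  - destruct (ofinite_small op (tau A) w Hof Hw0) as [s [Hs Hsw]].
    assert (Hk : exists k, leE (mkE (bk k)) s).
    { destruct s as [s0 q|].
      - unfold zeroE in Hs. cbn [ltE] in Hs. destruct (Hconv s0 Hs) as [K HK]. exists K.
        specialize (HK K (le_n K)). pose proof (Hs1 K). destruct (Hinv K) as (I1 & I2 & _).
        rew_mkE. cbn [leE]. lra.
      - exists O. apply leE_Inf. }
    destruct Hk as [k Hk].
    apply (ltE_irrefl w). eapply leE_lt_trans; [|exact Hsw].
    apply leE_trans with (op (mkE (bk k)) (u k)). apply HF1.
    apply (op_mono op one Hpm); auto.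
  - assert (Hstp : 0 < st) by lra.
    destruct (inf_exists (fun y => exists n, y = u n)) as [us Hus].
    assert (Hsig : pos_finite (mkE st)) by (rew_mkE; cbn [pos_finite]; lra).
    destruct (classic (ltE (op (mkE st) us) w)) as [Hlt|Hge].
    + destruct (op_cont2 op one Hpm (mkE st) us Hsig _ (nbhd_lt _ _ Hlt)) as (U & W & HU & HW & Hc).
      rewrite (mkE_Fin st (Rlt_le _ _ Hstp)) in HU. cbn [nbhd] in HU. destruct HU as [eps [He Heps]].
      destruct (inf_eventually u us W Hudec Hus HW) as [K1 HK1].
      destruct (Hconv eps He) as [K2 HK2].
      set (K := Nat.max K1 K2).
      specialize (HK1 K ltac:(lia)). specialize (HK2 K ltac:(lia)).
      pose proof (Hs1 K). pose proof (Hs2 K).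
      assert (HU' : U (mkE (bk K))).
      { rew_mkE. apply Heps. rewrite Rabs_right; lra. }
      specialize (Hc (mkE (bk K)) (u K) HU' ltac:(rew_mkE; cbn [pos_finite]; lra) HK1). cbv beta in Hc.
      apply (ltE_irrefl w). eapply leE_lt_trans; [apply HF1|exact Hc].
    + assert (Hgt : ltE m' (op (mkE st) us)).
      { eapply ltE_le_trans; [exact Hw|]. apply leE_nlt; auto. }
      destruct (op_cont2 op one Hpm (mkE st) us Hsig _ (nbhd_gt _ _ Hgt)) as (U & W & HU & HW & Hc).
      rewrite (mkE_Fin st (Rlt_le _ _ Hstp)) in HU. cbn [nbhd] in HU. destruct HU as [eps [He Heps]].
      destruct (inf_eventually u us W Hudec Hus HW) as [K1 HK1].
      destruct (Hconv (Rmin eps st) ltac:(apply Rmin_pos; lra)) as [K2 HK2].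
      set (K := Nat.max K1 K2).
      specialize (HK1 K ltac:(lia)). specialize (HK2 K ltac:(lia)).
      pose proof (Hs1 K). pose proof (Hs2 K). pose proof (Rmin_l eps st). pose proof (Rmin_r eps st).
      destruct (Hinv K) as (I1 & _).
      assert (HU' : U (mkE (ak K))).
      { rew_mkE. apply Heps. rewrite Rabs_left1; lra. }
      specialize (Hc (mkE (ak K)) (u K) HU' ltac:(rew_mkE; cbn [pos_finite]; lra) HK1). cbv beta in Hc.
      apply (ltE_irrefl m'). eapply ltE_le_trans; [exact Hc|apply HF2].
Qed.

Lemma exists_floor y : 0 < y -> exists j : nat, INR j < y < INR j + 2.
Proof.
  intros Hy. destruct (Rlt_dec y 1) as [H1|H1].
  - exists O. simpl. lra.
  - destruct (archimed y) as [H2 H3].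
    assert (Hz : (1 < up y)%Z) by (apply lt_IZR; simpl; lra).
    exists (Z.to_nat (up y - 2)). rewrite INR_IZR_INZ, Z2Nat.id by lia. rewrite minus_IZR. simpl. lra.
Qed.

Lemma upper_fin A m' : B A -> ofinite op (tau A) ->
  (forall t, t <> Inf -> leE (op t (tau (fun x => A x /\ ltE t (cden x)))) m') -> leE (nu A) m'.
Proof.
  intros HA Hof Hm'. apply leE_nlt. intros Hw.
  set (Zs := fun x => A x /\ ~ ltE zeroE (cden x)).
  set (P1 := fun x => A x /\ cden x = Inf).
  set (P := fun k => match k with O => Zs | S O => P1 | S (S j) => piece A (INR j) (INR j + 2) end).
  assert (HBZ : B Zs) by (apply B_diff; auto; apply cden_meas; discriminate).
  assert (HB1 : B P1) by (apply B_inter; auto; apply B_Inf).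
  assert (HBP : forall k, B (P k)).
  { intros [|[|j]]; auto. apply piece_B; auto. pose proof (pos_INR j). lra. }
  rewrite (mx_ext nu A (bigU P)) in Hw.
  2:{ intros x; split.
      - intros Hx. destruct (classic (ltE zeroE (cden x))) as [Hc|Hc].
        + destruct (cden x) as [y q|] eqn:Hcx.
          * unfold zeroE in Hc. cbn [ltE] in Hc. destruct (exists_floor y Hc) as [j Hj].
            exists (S (S j)). cbv beta iota. split; auto. rewrite Hcx. pose proof (pos_INR j).
            split; rew_mkE; cbn [ltE]; lra.
          * exists 1%nat. split; auto.
        + exists O. split; auto.
      - intros [[|[|j]] Hk]; apply Hk. }
  destruct (sup_lt _ _ _ (mx_sup B nu Hnu P HBP) Hw) as [y [[k ->] Hk]].
  destruct k as [|[|j]].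
  - assert (H0 : nu Zs = zeroE).
    { apply (ofinite_lb op (tau A) (nu Zs) Hof). intros s Hs.
      assert (Hsub : forall b, 0 < b -> forall x, Zs x -> ltE (cden x) (mkE b)).
      { intros b Hb x [_ Hx]. apply leE_nlt in Hx. eapply leE_lt_trans; [exact Hx|]. rew_mkE. unfold zeroE. cbn [ltE]. lra. }
      assert (HtZ : leE (tau Zs) (tau A)) by (apply (mx_mono B tau Htau); auto; intros x [Hx _]; auto).
      destruct s as [s0 q|].
      - unfold zeroE in Hs. cbn [ltE] in Hs.
        eapply leE_trans. apply (K_bound Zs s0 q HBZ (Hsub s0 Hs)).
        apply (op_mono op one Hpm); auto. rewrite (mkE_Fin s0 q). apply leE_refl.
      - eapply leE_trans. apply (K_bound Zs 1 ltac:(lra) HBZ (Hsub 1 ltac:(lra))).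
        apply (op_mono op one Hpm); auto. apply leE_Inf. }
    change (P O) with Zs in Hk. rewrite H0 in Hk.
    exact (ltE_irrefl _ (leE_lt_trans _ _ _ (leE_0 m') Hk)).
  - change (P 1%nat) with P1 in Hk.
    assert (Hof1 : ofinite op (tau P1)).
    { apply (ofinite_down op one Hpm) with (tau A); auto. apply (mx_mono B tau Htau); auto. intros x [Hx _]; auto. }
    pose proof (Hac P1 HB1 Hof1) as Hac1.
    assert (Hle : leE (op Inf (tau P1)) m').
    { apply leE_nlt. intros Hlt.
      destruct (op_left_open op one Hpm Inf (tau P1) m' ltac:(unfold zeroE; cbn [ltE]; auto) Hlt) as [U [HU HUs]].
      cbn [nbhd] in HU. destruct HU as [M0 [_ HM]].
      pose proof (Rmax_l M0 0). pose proof (Rmax_r M0 0).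
      assert (Hs0 : 0 <= Rmax M0 0 + 1) by lra.
      specialize (HUs (Fin (Rmax M0 0 + 1) Hs0) (HM _ Hs0 ltac:(lra)) ltac:(unfold zeroE; cbn [ltE]; lra)).
      specialize (Hm' (Fin (Rmax M0 0 + 1) Hs0) ltac:(discriminate)).
      apply (ltE_irrefl m'). eapply ltE_le_trans; [exact HUs|]. eapply leE_trans; [|exact Hm'].
      apply (op_monor op one Hpm). apply (mx_mono B tau Htau); auto.
      apply B_inter; auto. apply cden_meas; discriminate.
      intros x [Hx Hc]. split; auto. rewrite Hc. cbn [ltE]. auto. }
    apply (ltE_irrefl m'). eapply ltE_le_trans; [exact Hk|]. eapply leE_trans; [exact Hac1|exact Hle].
  - apply (bisect A m' (INR j) (INR j + 2)); auto. apply pos_INR. lra.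
Qed.

Lemma upper A m' : B A ->
  (forall t, t <> Inf -> leE (op t (tau (fun x => A x /\ ltE t (cden x)))) m') -> leE (nu A) m'.
Proof.
  intros HA Hm'. destruct Hfin as [Fs [HFs Hcov]].
  rewrite (mx_ext nu A (bigU (fun k x => A x /\ Fs k x))).
  2:{ intros x; split. intros Hx. destruct (Hcov x) as [k Hk]. exists k; auto. intros [k [Hx _]]; auto. }
  apply (mx_least B nu Hnu). intros k; apply B_inter; auto; apply HFs.
  intros k. assert (HBk : B (fun x => A x /\ Fs k x)) by (apply B_inter; auto; apply HFs).
  apply upper_fin; auto.
  - apply (ofinite_down op one Hpm) with (tau (Fs k)). apply (mx_mono B tau Htau); auto. apply HFs.
    intros x [_ Hx]; auto. apply HFs.
  - intros t Ht. eapply leE_trans; [|apply (Hm' t Ht)]. apply (op_monor op one Hpm).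
    apply (mx_mono B tau Htau). apply B_inter; auto. apply cden_meas; auto.
    apply B_inter; auto. apply cden_meas; auto. intros x [[Hx _] Hc]; auto.
Qed.

Lemma RN_holds : has_density op B nu tau.
Proof.
  exists cden. split. apply cden_meas. intros A HA. split.
  - intros y [t [Ht ->]]. apply lower_bound; auto.
  - intros m' Hm'. apply upper; auto. intros t Ht. apply Hm'. eauto.
Qed.

End RN.


Theorem mainTheorem1 (op : ERp -> ERp -> ERp) (one : ERp)
  (E : Type) (B : (E -> Prop) -> Prop) (tau : (E -> Prop) -> ERp) :
  pseudo_mult op one -> nondegenerate op one ->
  inhabited E -> sigma_algebra B -> sigma_maxitive B tau ->
  (RN_property op B tau <-> sigma_ofinite op B tau /\ sigma_principal B tau).
Proof.
  intros Hpm _ _ HB Htau. split.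
  - intros HRN. split.
    + eapply RN_sigma_ofinite; eauto.
    + eapply RN_sigma_principal; eauto.
  - intros [Hfin Hpr] nu Hnu Hac. eapply RN_holds; eauto.
Qed.
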